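(* Let $G$ be a group, $A$ an alphabet for $G$, and $L\subset A^*$ a regular language such that $\bar L=G$ and the evaluation map $L\to G$ is finite-to-one. Then for each $g\in G$ there are only finitely many words $y\in A^*$ such that $xyz\in L$ for some $x,z\in A^*$ and $\bar y=g$.
   Context: An alphabet for $G$ is a finite set $A$ with a map $a\mapsto\bar a\in G$ whose image generates $G$ as a monoid; $w\mapsto\bar w$ denotes the induced monoid homomorphism $A^*\to G$. *)

(* Defs.v *)
From HB Require Import structures.
From mathcomp Require Import all_boot monoid.
Set Implicit Arguments. Unset Strict Implicit. Unset Printing Implicit Defensive.

Local Open Scope group_scope.

Definition word_eval (G : monoidType) (A : Type) (ev : A -> G) (w : seq A) : G :=
  foldr (fun a g => ev a * g) 1 w.

Definition is_alphabet (G : monoidType) (A : finType) (ev : A -> G) : Prop :=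
  forall g : G, exists w : seq A, word_eval ev w = g.

Record dfa (A : finType) := DFA {
  dfa_state : finType;
  dfa_start : dfa_state;
  dfa_trans : dfa_state -> A -> dfa_state;
  dfa_final : pred dfa_state }.

Definition dfa_accepts (A : finType) (M : dfa A) (w : seq A) : bool :=
  @dfa_final A M (foldl (@dfa_trans A M) (@dfa_start A M) w).

Definition regular (A : finType) (L : seq A -> Prop) : Prop :=
  exists M : dfa A, forall w, L w <-> dfa_accepts M w.

Definition finite_words (A : eqType) (S : seq A -> Prop) : Prop :=
  exists s : seq (seq A), forall w, S w -> w \in s.

(* Main.v *)
Require Import Defs.
From mathcomp Require Import all_boot monoid.
From Stdlib Require Import Classical.

Lemma word_eval_cat (G : monoidType) (A : Type) (ev : A -> G) (s1 s2 : seq A) :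
  word_eval ev (s1 ++ s2) = (word_eval ev s1 * word_eval ev s2)%g.
Proof.
elim: s1 => [|a s IH] /=; first by rewrite mul1g.
by rewrite /word_eval /= -/(word_eval ev (s ++ s2)) IH -/(word_eval ev s) mulgA.
Qed.

Lemma finite_union (A : eqType) (T : eqType) (l : seq T) (P : T -> seq A -> Prop) :
  (forall t, finite_words (P t)) ->
  finite_words (fun y => exists2 t, t \in l & P t y).
Proof.
move=> H; elim: l => [|t l [s Hs]].
  by exists [::] => w [t].
case: (H t) => s0 Hs0; exists (s0 ++ s) => w [t'].
rewrite inE => /orP [/eqP ->|Ht'] Hw; first by rewrite mem_cat Hs0.
by rewrite mem_cat (Hs w) ?orbT //; exists t'.
Qed.

Theorem lemma3p4 (G : groupType) (A : finType) (ev : A -> G)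
    (L : seq A -> Prop) :
  is_alphabet ev ->
  regular L ->
  (forall g : G, exists w, L w /\ word_eval ev w = g) ->
  (forall g : G, finite_words (fun w => L w /\ word_eval ev w = g)) ->
  forall g : G,
    finite_words (fun y => (exists x z : seq A, L (x ++ y ++ z)) /\
                           word_eval ev y = g).
Proof.
move=> _ [M HM] _ Hfin g.
pose run q w := foldl (@dfa_trans A M) q w.
pose S (p : @dfa_state A M * @dfa_state A M) y :=
  (exists x z, run (@dfa_start A M) x = p.1 /\ run p.1 y = p.2 /\
                @dfa_final A M (run p.2 z)) /\ word_eval ev y = g.
have HS : forall p, finite_words (S p).
  move=> p; case: (classic (exists y, S p y)) => [[y0 [[x0 [z0 [H1 [H2 H3]]]] _]]|Hn];
    last by exists [::] => w Hw; case: Hn; exists w.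
  case: (Hfin (word_eval ev x0 * g * word_eval ev z0)%g) => s Hs.
  exists (map (fun w => drop (size x0) (take (size w - size z0)%N w)) s).
  move=> y [[x [z [E1 [E2 E3]]]] Ey].
  have Hw : L (x0 ++ y ++ z0).
    apply/HM; rewrite /dfa_accepts !foldl_cat.
    by rewrite -/(run _ x0) H1 -/(run _ y) E2.
  have Hv : word_eval ev (x0 ++ y ++ z0) = (word_eval ev x0 * g * word_eval ev z0)%g.
    by rewrite !word_eval_cat Ey mulgA.
  apply/mapP; exists (x0 ++ y ++ z0); first exact: Hs.
  rewrite catA size_cat addnK take_size_cat // drop_size_cat //.
have [s Hs] := @finite_union A _ (enum [set: (@dfa_state A M * @dfa_state A M)%type]) S HS.
exists s => y [[x [z Hxz]] Ey]; apply: Hs.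
exists (run (@dfa_start A M) x, run (run (@dfa_start A M) x) y).
  by rewrite mem_enum in_setT.
split=> //; exists x, z; split=> //; split=> //.
by move/HM: Hxz; rewrite /dfa_accepts !foldl_cat.
Qed.
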